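(* For each $K\in\mathbb{N}$, there exists a $\Delta\in\mathbb{N}$ such that the following holds. If $G$ is a finite graph with $\delta(x,y)\le K$ for all $x,y\in V(G)$, then either $G$ or its complement $\overline{G}$ has maximum degree at most $\Delta$.
   Context: All graphs are finite and simple. For a vertex $x$ of a graph $G$, $\Gamma(x)$ denotes its neighbourhood. The neighbourhood-distance between two vertices $x,y$ is $\delta(x,y)=|(\Gamma(x)\setminus \{y\})\,\triangle\, (\Gamma(y)\setminus\{x\})|$ (with $\delta(x,x)=0$), where $\triangle$ is symmetric difference. $\overline{G}$ is the complement of $G$. *)

(* Defs.v *)
From mathcomp Require Import all_boot.
Set Implicit Arguments. Unset Strict Implicit. Unset Printing Implicit Defensive.

Definition simple_graph (T : finType) (e : rel T) : Prop :=
  symmetric e /\ irreflexive e.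

Definition nbhd (T : finType) (e : rel T) (x : T) : {set T} := [set y | e x y].

Definition symdiff (T : finType) (A B : {set T}) : {set T} := (A :\: B) :|: (B :\: A).

Definition ndist (T : finType) (e : rel T) (x y : T) : nat :=
  if x == y then 0 else #|symdiff (nbhd e x :\ y) (nbhd e y :\ x)|.

Definition compl_rel (T : finType) (e : rel T) : rel T :=
  fun x y => (x != y) && ~~ e x y.

Definition maxdeg_le (T : finType) (e : rel T) (D : nat) : Prop :=
  forall x : T, #|nbhd e x| <= D.

(* Main.v *)
Require Import Defs.
From mathcomp Require Import all_boot.
From mathcomp Require Import zify.

Set Implicit Arguments. Unset Strict Implicit. Unset Printing Implicit Defensive.

Lemma sum_bool_card (T : finType) (B : {set T}) (P : pred T) :
  \sum_(b in B) (P b : nat) = #|[set b in B | P b]|.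
Proof.
rewrite -sum1_card big_mkcond /= [RHS]big_mkcond /=.
apply: eq_bigr => b _; rewrite !inE; by case: (b \in B); case: (P b).
Qed.

Lemma deg_transfer (T : finType) (e : rel T) K x y :
  simple_graph e -> (forall x y : T, ndist e x y <= K) ->
  #|nbhd e y| <= #|nbhd e x| + K + 1.
Proof.
move=> [sy ir] hK.
have := hK x y; rewrite /ndist.
case: eqP => [->|nxy] hd; first by rewrite -addnA leq_addr.
have sub : nbhd e y \subset (symdiff (nbhd e x :\ y) (nbhd e y :\ x) :|: nbhd e x) :|: [set x].
  apply/subsetP => z; rewrite !inE => hyz.
  case: (z =P x) => [->|nzx]; first by rewrite !orbT.
  have nzy : z != y by apply/eqP => E; rewrite E ir in hyz.
  rewrite hyz nzy /=; by case: (e x z); rewrite ?orbT.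
apply: (leq_trans (subset_leq_card sub)).
apply: (leq_trans (leq_card_setU _ _)); rewrite cards1 leq_add2r.
apply: (leq_trans (leq_card_setU _ _)); rewrite addnC leq_add2l //.
Qed.

Lemma one_side (T : finType) (e : rel T) K x :
  simple_graph e -> (forall x y : T, ndist e x y <= K) ->
  #|nbhd e x| <= K.*2 \/ #|nbhd (compl_rel e) x| <= K.*2.
Proof.
move=> [sy ir] hK.
set A := nbhd e x; set B := nbhd (compl_rel e) x.
have h1 : forall a, a \in A -> #|[set b in B | e a b]| <= K.
  move=> a; rewrite inE => hxa.
  have nxa : x != a by apply/eqP => E; rewrite E ir in hxa.
  have := hK x a; rewrite /ndist (negbTE nxa) => hd.
  apply: leq_trans hd; apply: subset_leq_card; apply/subsetP => b.
  rewrite !inE /compl_rel => /andP [/andP [nxb nexb] eab].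
  have nba : b != a by apply/eqP => E; rewrite E ir in eab.
  by rewrite eab (negbTE nexb) nba eq_sym nxb /=.
have h2 : forall b, b \in B -> #|A| <= #|[set a in A | e a b]| + K.
  move=> b; rewrite inE /compl_rel => /andP [nxb nexb].
  have := hK x b; rewrite /ndist (negbTE nxb) => hd.
  have ->: [set a in A | e a b] = A :&: [set a | e a b] by apply/setP => a; rewrite !inE.
  rewrite -(cardsID [set a | e a b] A) leq_add2l.
  apply: leq_trans hd; apply: subset_leq_card; apply/subsetP => a.
  rewrite !inE => /andP [neab hxa].
  have nab : a != b by apply/eqP => E; rewrite -E hxa in nexb.
  by rewrite hxa nab sy (negbTE neab) /= andbF.
have E : \sum_(a in A) \sum_(b in B) (e a b : nat) = \sum_(b in B) \sum_(a in A) (e a b : nat).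
  exact: exchange_big.
have L : \sum_(a in A) \sum_(b in B) (e a b : nat) <= #|A| * K.
  rewrite -sum_nat_const; apply: leq_sum => a ha; rewrite sum_bool_card; exact: h1.
have R : #|B| * (#|A| - K) <= \sum_(b in B) \sum_(a in A) (e a b : nat).
  rewrite -sum_nat_const; apply: leq_sum => b hb.
  rewrite (sum_bool_card A (fun a => e a b)).
  have := h2 b hb; lia.
rewrite E in L.
have := leq_trans R L.
set a := #|A|; set b := #|B|.
case: (leqP a K.*2) => ha; first by left.
case: (leqP b K.*2) => hb; first by right.
move=> H; exfalso.
have ha' : K.+1 <= a - K by lia.
have : (K.*2).+1 * (a - K) <= b * (a - K) by apply: leq_mul.
have : a * K = (a - K) * K + K * K by rewrite -mulnDl subnK //; lia.
nia.
Qed.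

Theorem proposition2p1 :
  forall K : nat, exists Delta : nat,
    forall (T : finType) (e : rel T),
      simple_graph e ->
      (forall x y : T, ndist e x y <= K) ->
      maxdeg_le e Delta \/ maxdeg_le (compl_rel e) Delta.
Proof.
move=> K; exists (3 * K + 1) => T e hs hK.
case: (boolP [exists x, #|nbhd e x| <= K.*2]) => [/existsP [x hx]|/existsPn hn].
  left => y; have := @deg_transfer T e K x y hs hK; lia.
right => y; case: (@one_side T e K y hs hK) => h; last lia.
by move: (hn y); rewrite h.
Qed.
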